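(* For all positive integers $n,d$, $k(n+d)\le k(n)+\left\lceil \dfrac{d}{\lfloor\sqrt{n}\rfloor}\right\rceil$.
   Context: A system on $n$ elements is a triple $(\mathcal{F},w,s)$ where $\mathcal{F}=(F_1,\dots,F_m)$ is a collection of subsets of $[n]$, $w\in[0,1]^m$ with $\sum_i w_i=1$, and $s\in[0,1]^{m\times m\times n}$ with $\sum_p s_{ijp}=1$ for all $i,j$. It is intersecting if $s_{ijp}>0$ implies $p\in F_i\cap F_j$. It is balanced if for all $p\in[n]$, $\sum_{i,j} w_iw_js_{ijp}=1/n$. Its cardinality is the size of the largest set in $\mathcal{F}$. $k(n)$ is the minimum $k$ such that there exists a balanced intersecting system on $n$ elements with cardinality $k$. *)

(* Defs.v *)
From HB Require Import structures.
From mathcomp Require Import all_boot all_order all_algebra.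
From mathcomp Require Import boolp Rstruct.
From Stdlib Require Rdefinitions.
Notation R := Rdefinitions.R.
Set Implicit Arguments. Unset Strict Implicit. Unset Printing Implicit Defensive.
Import Order.TTheory GRing.Theory Num.Theory.
Local Open Scope ring_scope.

(* The ground set [n] is represented by 'I_n, the collection F = (F_1..F_m)
   by a function 'I_m -> {set 'I_n}. *)

Definition is_system (n m : nat) (F : 'I_m -> {set 'I_n}) (w : 'I_m -> R)
    (s : 'I_m -> 'I_m -> 'I_n -> R) : Prop :=
  [/\ (forall i, 0 <= w i <= 1),
      \sum_(i < m) w i = 1,
      (forall i j p, 0 <= s i j p <= 1) &
      (forall i j, \sum_(p < n) s i j p = 1)].

Definition is_intersecting (n m : nat) (F : 'I_m -> {set 'I_n})
    (s : 'I_m -> 'I_m -> 'I_n -> R) : Prop :=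
  forall i j p, 0 < s i j p -> p \in F i :&: F j.

Definition is_balanced (n m : nat) (w : 'I_m -> R)
    (s : 'I_m -> 'I_m -> 'I_n -> R) : Prop :=
  forall p : 'I_n, \sum_(i < m) \sum_(j < m) w i * w j * s i j p = (n%:R)^-1.

Definition cardinality (n m : nat) (F : 'I_m -> {set 'I_n}) : nat :=
  \max_(i < m) #|F i|.

Definition achievable (n k : nat) : Prop :=
  exists m (F : 'I_m -> {set 'I_n}) w s,
    [/\ is_system F w s, is_intersecting F s, is_balanced w s
      & cardinality F = k].

Lemma achievable_ex (n : nat) : exists k, `[< achievable n.+1 k >].
Proof.
exists n.+1; apply/asboolP.
exists 1%N, (fun _ => setT), (fun _ => 1), (fun _ _ _ => (n.+1%:R)^-1).
have n0 : (n.+1%:R : R) != 0 by rewrite pnatr_eq0.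
split.
- split.
  + by move=> i; rewrite lexx ler01.
  + by rewrite big_ord1.
  + move=> i j p; rewrite invr_ge0 ler0n /= invf_le1 ?ltr0Sn //.
    by rewrite ler1n.
  + move=> i j; by rewrite sumr_const card_ord -[RHS](mulVf n0) mulr_natr.
- by move=> i j p _; rewrite inE /= !inE.
- by move=> p; rewrite !big_ord1 !mul1r.
- by rewrite /cardinality big_ord1 cardsT card_ord.
Qed.

(* k(n) = minimum cardinality of a balanced intersecting system on n elements
   (for n = 0 there is no system at all; we set k(0) = 0, unused below). *)
Definition kmin (n : nat) : nat :=
  match n with
  | 0 => 0
  | n'.+1 => ex_minn (achievable_ex n')
  end.

Definition isqrt (n : nat) : nat := Nat.sqrt n.
Definition ceil_div (a b : nat) : nat := (a + b.-1) %/ b.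

(* Main.v *)
Require Import Defs.
From mathcomp Require Import all_boot all_order all_algebra.
From mathcomp Require Import boolp Rstruct.
From mathcomp Require Import ring lra zify.
Set Implicit Arguments. Unset Strict Implicit. Unset Printing Implicit Defensive.
Import Order.TTheory GRing.Theory Num.Theory.
Local Open Scope ring_scope.

Lemma sum_T (T : finType) (f : T -> R) :
  \sum_(i < #|T|) f (enum_val i) = \sum_(t : T) f t.
Proof. by rewrite (big_enum_val (A := T)). Qed.

Lemma max_T (T : finType) (f : T -> nat) :
  (\max_(i < #|T|) f (enum_val i) = \max_(t : T) f t)%N.
Proof. by rewrite (big_enum_val (A := T)). Qed.

Lemma achievable_fin N k (T : finType) (F : T -> {set 'I_N}) (w : T -> R)
  (s : T -> T -> 'I_N -> R) :
  (forall i, 0 <= w i <= 1) -> \sum_i w i = 1 ->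
  (forall i j p, 0 <= s i j p <= 1) -> (forall i j, \sum_(p < N) s i j p = 1) ->
  (forall i j p, 0 < s i j p -> p \in F i :&: F j) ->
  (forall p, \sum_i \sum_j w i * w j * s i j p = (N%:R)^-1) ->
  (\max_i #|F i| = k)%N -> achievable N k.
Proof.
move=> h1 h2 h3 h4 h5 h6 h7.
exists #|T|, (fun i => F (enum_val i)), (fun i => w (enum_val i)),
  (fun i j => s (enum_val i) (enum_val j)); split.
- split => //; first by rewrite sum_T.
- by move=> i j p /h5.
- move=> p; rewrite -[RHS](h6 p).
  rewrite (eq_bigr (fun i => \sum_j w (enum_val i) * w j * s (enum_val i) j p)).
    by rewrite (sum_T (fun i => \sum_j w i * w j * s i j p)).
  by move=> i _; rewrite (sum_T (fun j => w (enum_val i) * w j * s (enum_val i) j p)).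
- by rewrite /cardinality (max_T (fun t => #|F t|)).
Qed.
Lemma sum_pair_prod (I J : finType) (g : I -> I -> R) (h : J -> J -> R) :
  \sum_(t : I * J) \sum_(u : I * J) g t.1 u.1 * h t.2 u.2 =
  (\sum_i \sum_j g i j) * (\sum_q \sum_q' h q q').
Proof.
rewrite -(pair_bigA _ (fun i q => \sum_(u : I * J) g i u.1 * h q u.2)).
rewrite big_distrl /=; apply: eq_bigr => i _.
under eq_bigr => q _ do rewrite -(pair_bigA _ (fun j q' => g i j * h q q')) /=.
rewrite exchange_big /= big_distrl /=; apply: eq_bigr => j _.
rewrite big_distrr /=; apply: eq_bigr => q _.
by rewrite big_distrr.
Qed.

Lemma split_l n d (p : 'I_n) : split (lshift d p) = inl p.
Proof. exact: (unsplitK (inl _)). Qed.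
Lemma split_r n d (p : 'I_d) : split (rshift n p) = inr p.
Proof. exact: (unsplitK (inr _)). Qed.

Lemma sum_delta d (q : 'I_d) (a : R) :
  \sum_(q' < d) (if q == q' then a else 0) = a.
Proof.
rewrite (bigD1 q) //= eqxx big1 ?addr0 // => j; by rewrite eq_sym => /negbTE ->.
Qed.

Lemma step n d k : (0 < n)%N -> (0 < d)%N -> (d * d <= n)%N ->
  achievable n k -> achievable (n + d) k.+1.
Proof.
move=> hn hd hdd [m [F [w [s [[hw1 hw2 hs1 hs2] hint hbal hcard]]]]].
set a : R := (d * d)%:R / (n + d)%:R.
have dpos : (0 : R) < d%:R by rewrite ltr0n.
have npos : (0 : R) < n%:R by rewrite ltr0n.
have ndpos : (0 : R) < (n + d)%:R by rewrite ltr0n addn_gt0 hd orbT.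
have ha0 : 0 <= a by rewrite /a divr_ge0 // ler0n.
have ha1 : a <= 1.
  rewrite /a ler_pdivrMr // mul1r ler_nat; lia.
pose T := ('I_m * 'I_d)%type.
pose F' (t : T) := rshift n t.2 |: (lshift d @: F t.1).
pose w' (t : T) := w t.1 / d%:R.
pose c (q q' : 'I_d) : R := if q == q' then 1 - a else 1.
pose s' (t u : T) (p : 'I_(n + d)) : R :=
  match split p with
  | inl p0 => s t.1 u.1 p0 * c t.2 u.2
  | inr r => if (t.2 == r) && (u.2 == r) then a else 0
  end.
apply: (@achievable_fin _ _ T F' w' s').
- move=> t; have /andP[h0 h1] := hw1 t.1.
  rewrite /w' divr_ge0 ?ler0n //= ler_pdivrMr // mul1r; apply: le_trans h1 _.
  by rewrite ler1n.
- rewrite -(pair_bigA _ (fun i q => w i / d%:R)) /=.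
  under eq_bigr => i _ do rewrite sumr_const card_ord -(mulr_natr (w i / d%:R) d) divfK ?gt_eqF //.
  exact: hw2.
- move=> t u p; rewrite /s'; case: (split p) => [p0|r].
    have /andP[h0 h1] := hs1 t.1 u.1 p0; rewrite /c; case: ifP => _; nra.
  by case: ifP => _; rewrite ?lexx ?ler01 ?ha0 ?ha1.
- move=> t u; rewrite big_split_ord /=.
  under eq_bigr => p _ do rewrite /s' split_l.
  under [X in _ + X]eq_bigr => p _ do rewrite /s' split_r.
  rewrite -big_distrl /= hs2 mul1r /c.
  case: eqP => [->|ne].
    under eq_bigr => r _ do rewrite andbb.
    rewrite sum_delta; ring.
  rewrite big1 ?addr0 // => r _.
  by case: eqP => // h1; case: eqP => // h2; case: ne; rewrite h1 h2.
- move=> t u p; rewrite -(splitK p); case: (split p) => [p0|r] /=;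
    rewrite /s' ?split_l ?split_r.
    move=> hpos.
    have hs : 0 < s t.1 u.1 p0.
      rewrite lt0r; apply/andP; split; last by case/andP: (hs1 t.1 u.1 p0).
      by apply: contraTneq hpos => ->; rewrite mul0r ltxx.
    have /setIP[h1 h2] := hint _ _ _ hs.
    by rewrite in_setI !in_setU1 !(mem_imset _ _ (@lshift_inj _ _)) h1 h2 !orbT.
  case: ifP => [/andP[/eqP h1 /eqP h2] _ | _]; last by rewrite ltxx.
  by rewrite in_setI !in_setU1 h1 h2 !eqxx.
- move=> p; rewrite -(splitK p); case: (split p) => [p0|r] /=.
    transitivity (\sum_(t : T) \sum_(u : T)
      (fun i j => w i * w j * s i j p0) t.1 u.1 *
      (fun q q' => c q q' / d%:R / d%:R) t.2 u.2).
      apply: eq_bigr => t _; apply: eq_bigr => u _.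
      by rewrite /s' split_l /w' /=; ring.
    rewrite (sum_pair_prod (fun i j => w i * w j * s i j p0) (fun q q' => c q q' / d%:R / d%:R)) /= hbal.
    have Hc q : \sum_q' c q q' = d%:R - a.
      transitivity (\sum_q' (1 - (if q == q' then a else 0))).
        by apply: eq_bigr => q' _; rewrite /c; case: eqP => _; ring.
      by rewrite sumrB sumr_const card_ord sum_delta.
    under eq_bigr => q _ do rewrite -!big_distrl /= Hc.
    rewrite sumr_const card_ord -(mulr_natr ((d%:R - a) / d%:R / d%:R) d) /a natrM.
    rewrite natrD in ndpos *.
    field.
    by rewrite (gt_eqF ndpos) (gt_eqF dpos) (gt_eqF npos).
  transitivity (\sum_(t : T) \sum_(u : T)
      (fun i j => w i * w j) t.1 u.1 *
      (fun q q' => (if (q == r) && (q' == r) then a else 0) / d%:R / d%:R) t.2 u.2).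
    apply: eq_bigr => t _; apply: eq_bigr => u _.
    by rewrite /s' split_r /w' /=; ring.
  rewrite (sum_pair_prod (fun i j => w i * w j) (fun q q' => (if (q == r) && (q' == r) then a else 0) / d%:R / d%:R)) /=.
  have -> : \sum_i \sum_j w i * w j = 1.
    under eq_bigr => i _ do rewrite -big_distrr /= hw2 mulr1.
    exact: hw2.
  rewrite mul1r (bigD1 r) //= [X in _ + X]big1 ?addr0; last first.
    move=> q /negbTE qr; rewrite big1 // => q' _; by rewrite qr /= !mul0r.
  rewrite eqxx /=.
  under eq_bigr => q' _ do rewrite (eq_sym q').
  rewrite -!big_distrl /= sum_delta /a natrM.
  rewrite natrD in ndpos *.
  field.
  by rewrite (gt_eqF ndpos) (gt_eqF dpos).
- have hc t : #|F' t| = (#|F t.1|).+1.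
    rewrite /F' cardsU1 card_imset; last exact: lshift_inj.
    have -> : rshift n t.2 \notin [set lshift d x | x in F t.1] => //.
    apply/imsetP => [[x _ /eqP]]; by rewrite eq_rlshift.
  rewrite (eq_bigr (fun t => (#|F t.1|).+1)) //.
  have hm : (0 < m)%N.
    case: (pickP 'I_m) => [i0 _ | h0]; first exact: (leq_ltn_trans _ (ltn_ord i0)).
    by move: hw2; rewrite big_pred0 // => /eqP; rewrite eq_sym oner_eq0.
  have hT : (0 < #|{: 'I_m * 'I_d}|)%N by rewrite card_prod !card_ord muln_gt0 hm hd.
  have [t0 Ht0] := bigop.eq_bigmax (fun t : 'I_m * 'I_d => (#|F t.1|).+1) hT.
  rewrite Ht0.
  congr S; apply/eqP; rewrite eqn_leq; apply/andP; split.
    by rewrite -hcard /cardinality; exact: (@bigop.leq_bigmax _ (fun i => #|F i|) t0.1).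
  rewrite -hcard /cardinality; apply/bigmax_leqP => i _.
  have := leq_bigmax (F := fun t : 'I_m * 'I_d => (#|F t.1|).+1) (i, t0.2).
  by rewrite Ht0 ltnS.
Qed.
From Stdlib Require Import PeanoNat.
Lemma kmin_spec n : (0 < n)%N -> achievable n (kmin n) /\
  forall k, achievable n k -> (kmin n <= k)%N.
Proof.
case: n => // n _ /=; case: ex_minnP => k /asboolP hk hmin; split => // k' hk'.
by apply: hmin; apply/asboolP.
Qed.

Lemma step_k n d : (0 < n)%N -> (0 < d)%N -> (d * d <= n)%N ->
  (kmin (n + d) <= kmin n + 1)%N.
Proof.
move=> hn hd hdd; have [h1 _] := kmin_spec hn.
have [_ h2] := kmin_spec (n := n + d) (ltn_addr _ hn).
by rewrite addn1; apply: h2; apply: step.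
Qed.

Lemma isqrt_sq n : (isqrt n * isqrt n <= n)%N.
Proof. have [h _] := Nat.sqrt_spec n (Nat.le_0_l n); by apply/ssrnat.leP. Qed.

Lemma isqrt_mono a b : (a <= b)%N -> (isqrt a <= isqrt b)%N.
Proof. by move/ssrnat.leP => h; apply/ssrnat.leP; apply: Nat.sqrt_le_mono. Qed.

Lemma isqrt_pos n : (0 < n)%N -> (0 < isqrt n)%N.
Proof.
move=> hn; have [_ h] := Nat.sqrt_spec n (Nat.le_0_l n).
rewrite lt0n /isqrt; apply/eqP => E; move: h; rewrite E; lia.
Qed.

Lemma claim c : forall n d, (0 < n)%N -> (d <= c * isqrt n)%N ->
  (kmin (n + d) <= kmin n + c)%N.
Proof.
elim: c => [|c IH] n d hn hd.
  by move: hd; rewrite mul0n leqn0 => /eqP ->; rewrite !addn0.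
have hr := isqrt_sq n.
case: (leqP d (isqrt n)) => hdr.
  case: (posnP d) => [->|d0]; first by rewrite !addn0 leq_addr.
  apply: leq_trans (step_k hn d0 _) _; last by rewrite leq_add2l.
  apply: leq_trans hr; exact: leq_mul.
pose r := isqrt n.
have r0 : (0 < r)%N by apply: isqrt_pos.
have -> : (n + d = (n + r) + (d - r))%N by rewrite -addnA subnKC // ltnW.
have h1 := step_k hn r0 hr.
have h2 : (kmin (n + r + (d - r)) <= kmin (n + r) + c)%N.
  apply: IH; first by rewrite addn_gt0 hn.
  apply: leq_trans (_ : c * r <= c * isqrt (n + r))%N; last first.
    by apply: leq_mul => //; apply: isqrt_mono; rewrite leq_addr.
  move: hd; rewrite mulSn -/r; lia.
lia.
Qed.

Local Close Scope ring_scope.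

Theorem corollary1 (n d : nat) (hn : (0 < n)%N) (hd : (0 < d)%N) :
  (kmin (n + d) <= kmin n + ceil_div d (isqrt n))%N.
Proof.
apply: claim => //.
have r0 := isqrt_pos hn.
rewrite /ceil_div; set r := isqrt n.
have := divn_eq (d + r.-1) r; have := ltn_pmod (d + r.-1) r0.
set q := ((d + r.-1) %/ r)%N; set m := ((d + r.-1) %% r)%N.
nia.
Qed.
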